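(* Let $\mathcal{C}_1,\dots,\mathcal{C}_K$ be a partition of $\mathcal{V}=\{v_1,\dots,v_N\}$ into nonempty sets and define $\mathbf{H}\in\mathbb{R}^{N\times K}$ by $H_{ij}=1/\sqrt{|\mathcal{C}_j|}$ if $v_i\in\mathcal{C}_j$ and $H_{ij}=0$ otherwise. Let $\mathbf{R}\in\{0,1\}^{N\times N}$ be the symmetric adjacency matrix of a representation graph on $\mathcal{V}$. If $\mathbf{R}\left(\mathbf{I}-\frac1N\mathbf{1}\mathbf{1}^\intercal\right)\mathbf{H}=\mathbf{0}$, then $$\frac{|\mathcal{C}_k\cap\mathcal{N}_{\mathcal{R}}(i)|}{|\mathcal{C}_k|}=\frac{|\mathcal{N}_{\mathcal{R}}(i)|}{N}\quad\text{for all }k\in[K],\ i\in[N].$$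
   Context: $\mathbf{I}$ is the $N\times N$ identity and $\mathbf{1}$ the all-ones vector in $\mathbb{R}^N$. $\mathcal{N}_{\mathcal{R}}(i)=\{v_j:R_{ij}=1\}$ is the set of neighbours of $v_i$ in the representation graph (self-loops allowed). *)

(* Defs.v *)
From mathcomp Require Import all_boot all_order all_algebra.
Set Implicit Arguments. Unset Strict Implicit. Unset Printing Implicit Defensive.
Import Order.TTheory GRing.Theory Num.Theory.
Local Open Scope ring_scope.

(* A partition C_1..C_K of V = 'I_N is encoded by the cluster-assignment map
   c : 'I_N -> 'I_K (v_i \in C_(c i)); cluster k is [set i | c i == k]. *)
Definition cluster (N K : nat) (c : 'I_N -> 'I_K) (k : 'I_K) : {set 'I_N} :=
  [set i | c i == k].

Definition Hmx (R : rcfType) (N K : nat) (c : 'I_N -> 'I_K) : 'M[R]_(N, K) :=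
  \matrix_(i < N, j < K)
    (if i \in cluster c j then (Num.sqrt (#|cluster c j|%:R))^-1 else 0).

Definition centering_mx (R : fieldType) (N : nat) : 'M[R]_N :=
  1%:M - (N%:R)^-1 *: const_mx 1.

Definition nbhd (R : pzRingType) (N : nat) (A : 'M[R]_N) (i : 'I_N) : {set 'I_N} :=
  [set j | A i j == 1].

(* Main.v *)
Require Import Defs.
From mathcomp Require Import all_boot all_order all_algebra.
Import Order.TTheory GRing.Theory Num.Theory.
Local Open Scope ring_scope.

Lemma sum_ind (F : pzRingType) (N : nat) (A : {set 'I_N}) (f : 'I_N -> F) :
  \sum_l (l \in A)%:R * f l = \sum_(l in A) f l.
Proof.
rewrite [RHS]big_mkcond; apply: eq_bigr => l _.
by case: (l \in A); rewrite ?mul1r ?mul0r.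
Qed.

Theorem lemma1 (F : rcfType) (N K : nat) (c : 'I_N -> 'I_K) (R : 'M[F]_N) :
  (forall k : 'I_K, cluster c k != set0) ->
  (forall i j, R i j = 0 \/ R i j = 1) ->
  R^T = R ->
  R *m (@centering_mx F N) *m Hmx F c = 0 ->
  forall (k : 'I_K) (i : 'I_N),
    #|cluster c k :&: nbhd R i|%:R / #|cluster c k|%:R
    = #|nbhd R i|%:R / N%:R :> F.
Proof.
move=> Hne H01 _ H0 k i.
have Rij : forall j, R i j = (j \in nbhd R i)%:R.
  move=> j; rewrite /nbhd inE; case: (H01 i j) => ->; rewrite ?eqxx //.
  by rewrite eq_sym oner_eq0.
set d : F := #|nbhd R i|%:R.
have dsum : \sum_l R i l = d.
  transitivity (\sum_l (l \in nbhd R i)%:R * (1 : F)).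
    by apply: eq_bigr => l _; rewrite Rij mulr1.
  by rewrite sum_ind sumr_const.
have RC : forall j, (R *m centering_mx F N) i j = R i j - N%:R^-1 * d.
  move=> j; rewrite !mxE.
  under eq_bigr do rewrite !mxE.
  under eq_bigr do rewrite mulr1 mulrBr.
  rewrite sumrB -mulr_suml dsum mulrC; congr (_ - _).
  rewrite (bigD1 j) //= eqxx mulr1 big1 ?addr0 // => l /negbTE ->.
  by rewrite mulr0.
have E := congr1 (fun M : 'M[F]_(N, K) => M i k) H0; rewrite /= !mxE in E.
set C := cluster c k in E *.
have hC : (0 < #|C|)%N by rewrite card_gt0 Hne.
have hN : (0 < N)%N by apply: leq_ltn_trans (ltn_ord i).
have sC : Num.sqrt (#|C|%:R : F) != 0 by rewrite sqrtr_eq0 -ltNge ltr0n.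
have E2 : \sum_(j in C) (R i j - N%:R^-1 * d) = 0.
  suff : (\sum_(j in C) (R i j - N%:R^-1 * d)) * (Num.sqrt (#|C|%:R : F))^-1 = 0.
    by move/eqP; rewrite mulf_eq0 invr_eq0 (negbTE sC) orbF => /eqP.
  rewrite mulr_suml -[RHS]E big_mkcond /=.
  apply: eq_bigr => j _; rewrite RC !mxE.
  by case: (j \in C); rewrite ?mul0r ?mulr0.
have E3 : \sum_(j in C) R i j = #|C :&: nbhd R i|%:R.
  rewrite -sum_ind.
  transitivity (\sum_l (l \in C :&: nbhd R i)%:R * (1:F)); last by rewrite sum_ind sumr_const.
  by apply: eq_bigr => l _; rewrite Rij mulr1 -natrM mulnb in_setI.
move: E2; rewrite sumrB E3 sumr_const => /eqP; rewrite subr_eq0 => /eqP ->.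
have hC' : (#|C|%:R : F) != 0 by rewrite pnatr_eq0 -lt0n.
by rewrite -[_ *+ #|C|]mulr_natr mulfK // mulrC.
Qed.
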